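(* Let $\Gamma$ be an inseparable weighted oriented graph with $n\geq 5$ vertices. Then there is a vertex $v$ of $\Gamma$ such that the induced weighted oriented graph $\Gamma[V\setminus\{v\}]$ on $n-1$ vertices is inseparable.
   Context: A weighted oriented graph $\Gamma$ with finite vertex set $V$ consists of a set of arcs, i.e. ordered pairs $(x,y)$ of distinct vertices, such that for any distinct $x,y$ at most one of $(x,y),(y,x)$ is an arc, each arc carrying a weight in $(1/2,1]$. For $Z\subseteq V$, $\Gamma[Z]$ is the induced weighted oriented graph on $Z$. A clan of $\Gamma$ is a subset $X\subseteq V$ such that for every $x\in V\setminus X$, one of the following holds: there is no arc between $x$ and any vertex of $X$; or for some weight $\alpha$, $(x,y)$ is an arc of weight $\alpha$ for all $y\in X$; or for some weight $\alpha$, $(y,x)$ is an arc of weight $\alpha$ for all $y\in X$. $\Gamma$ is separable if $V$ can be partitioned into two nonempty clans, and inseparable otherwise. *)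

(* Defs.v *)
From HB Require Import structures.
From mathcomp Require Import all_boot all_order all_algebra.
Set Implicit Arguments. Unset Strict Implicit. Unset Printing Implicit Defensive.
Import Order.TTheory GRing.Theory Num.Theory.
Local Open Scope ring_scope.

(* A weighted oriented graph on the finite vertex type T, weights in R.
   [arc x y] means (x,y) is an arc; [wt x y] is its weight (meaningful only
   when arc x y holds). *)
Record wograph (R : realFieldType) (T : finType) := WOGraph {
  arc : rel T;
  wt : T -> T -> R;
  arc_irr : forall x, ~~ arc x x;
  arc_asym : forall x y, arc x y -> ~~ arc y x;
  wt_range : forall x y, arc x y -> 2^-1 < wt x y <= 1
}.

Definition clan (R : realFieldType) (T : finType) (G : wograph R T)
    (S X : {set T}) : Prop :=
  X \subset S /\
  forall x, x \in S :\: X ->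
    (forall y, y \in X -> ~~ arc G x y /\ ~~ arc G y x) \/
    (exists a : R, forall y, y \in X -> arc G x y /\ wt G x y = a) \/
    (exists a : R, forall y, y \in X -> arc G y x /\ wt G y x = a).

Definition separable (R : realFieldType) (T : finType) (G : wograph R T)
    (S : {set T}) : Prop :=
  exists X Y : {set T},
    X != set0 /\ Y != set0 /\ X :&: Y = set0 /\ X :|: Y = S /\
    clan G S X /\ clan G S Y.

Definition inseparable (R : realFieldType) (T : finType) (G : wograph R T)
    (S : {set T}) : Prop := ~ separable G S.

(* Main.v *)
Require Import Defs.
From HB Require Import structures.
From mathcomp Require Import all_boot all_order all_algebra.
From Stdlib Require Import Classical.
From mathcomp Require Import zify.
Set Implicit Arguments. Unset Strict Implicit. Unset Printing Implicit Defensive.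

Lemma ar1 a b n : a + b = n -> 4 < n -> a <= 3 -> 1 < b. Proof. lia. Qed.
Lemma ar2 a b n : a + b = n -> 4 < n -> a <= 4 -> 0 < b. Proof. lia. Qed.

Section Main.
Variables (R : realFieldType) (T : finType) (G : wograph R T).

Definition lab (x y : T) : option (bool * R) :=
  if Defs.arc G x y then Some (true, Defs.wt G x y)
  else if Defs.arc G y x then Some (false, Defs.wt G y x) else None.

Definition linv (l : option (bool * R)) : option (bool * R) :=
  if l is Some (b, a) then Some (~~ b, a) else None.

Lemma linvK : involutive linv.
Proof. by case=> [[b a]|] //=; rewrite negbK. Qed.

Lemma labC x y : lab y x = linv (lab x y).
Proof.
rewrite /lab; case Hxy: (Defs.arc G x y); case Hyx: (Defs.arc G y x) => //=.
by have := Defs.arc_asym Hxy; rewrite Hyx.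
Qed.

Lemma labCE x y d : lab x y = d -> lab y x = linv d.
Proof. by move=> <-; exact: labC. Qed.

Lemma clan_lab S X x y y' : clan G S X -> x \in S :\: X -> y \in X -> y' \in X ->
  lab x y = lab x y'.
Proof.
move=> [_ H] Hx Hy Hy'.
have E : forall z, z \in X -> exists2 l, l = lab x y & lab x z = l.
  move=> z Hz; exists (lab x y) => //.
  case: (H x Hx) => [H1|[[a H1]|[a H1]]].
  - have [h1 h2] := H1 _ Hz; have [h3 h4] := H1 _ Hy.
    by rewrite /lab (negbTE h1) (negbTE h2) (negbTE h3) (negbTE h4).
  - have [h1 h2] := H1 _ Hz; have [h3 h4] := H1 _ Hy.
    by rewrite /lab h1 h3 h2 h4.
  - have [h1 h2] := H1 _ Hz; have [h3 h4] := H1 _ Hy.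
    by rewrite /lab (negbTE (Defs.arc_asym h1)) (negbTE (Defs.arc_asym h3)) h1 h3 h2 h4.
by have [l -> ->] := E _ Hy'.
Qed.

Lemma lab_clan (X : {set T}) x l : (forall y, y \in X -> lab x y = l) ->
    (forall y, y \in X -> ~~ Defs.arc G x y /\ ~~ Defs.arc G y x) \/
    (exists a : R, forall y, y \in X -> Defs.arc G x y /\ Defs.wt G x y = a) \/
    (exists a : R, forall y, y \in X -> Defs.arc G y x /\ Defs.wt G y x = a).
Proof.
case: l => [[[] a]|] H.
- right; left; exists a => y /H; rewrite /lab.
  by case: (Defs.arc G x y) => [[->]|] //; case: (Defs.arc G y x).
- right; right; exists a => y /H; rewrite /lab.
  by case: (Defs.arc G x y) => //; case: (Defs.arc G y x) => // [[->]].
- left => y /H; rewrite /lab.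
  by case: (Defs.arc G x y) => //; case: (Defs.arc G y x).
Qed.

Definition side (v : T) (X : {set T}) (d : option (bool * R)) :=
  [/\ v \notin X, X != set0, exists w, w \notin X /\ w != v &
      forall x w, x \in X -> w \notin X -> w != v -> lab x w = d].

Definition Bad v := exists X d, side v X d.

Lemma sep_side v : separable G ([set: T] :\ v) -> Bad v.
Proof.
move=> [X [Y [X0 [Y0 [XY [U [CX CY]]]]]]].
have /set0Pn [x0 Hx0] := X0; have /set0Pn [y0 Hy0] := Y0.
have inU : forall z, (z \in X) || (z \in Y) = (z != v).
  by move=> z; rewrite -in_setU U in_setD1 in_setT andbT.
have XnY : forall z, z \in X -> z \notin Y.
  move=> z Hz; apply/negP => Hz'.
  have H : z \in X :&: Y by rewrite inE Hz Hz'.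
  by move: H; rewrite XY inE.
exists X, (lab x0 y0); split.
- apply/negP => Hv; by have := inU v; rewrite Hv eqxx.
- done.
- exists y0; split; first by apply/negP => /XnY; rewrite Hy0.
  by rewrite -inU Hy0 orbT.
move=> x w Hx Hw Hwv.
have HwY : w \in Y by move: (inU w); rewrite Hwv (negbTE Hw).
have SX : forall z, z \in Y -> z \in ([set: T] :\ v) :\: X.
  move=> z Hz; rewrite inE -U inE Hz orbT andbT.
  by apply/negP => /XnY; rewrite Hz.
have SY : forall z, z \in X -> z \in ([set: T] :\ v) :\: Y.
  by move=> z Hz; rewrite inE -U inE Hz /= XnY.
rewrite (clan_lab CY (SY _ Hx) HwY Hy0).
rewrite labC (clan_lab CX (SX _ Hy0) Hx Hx0) -labC //.
Qed.

Lemma nocut_sep (X : {set T}) d :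
  X != set0 -> (exists w, w \notin X) ->
  (forall x w, x \in X -> w \notin X -> lab x w = d) -> separable G [set: T].
Proof.
move=> X0 [w0 Hw0] H.
exists X, (~: X); split=> //; split.
  by apply/set0Pn; exists w0; rewrite inE.
split; first by rewrite setICr.
split; first by rewrite setUCr.
split; split; first by apply/subsetP => z; rewrite inE.
- move=> x; rewrite !inE andbT => Hx.
  apply: (lab_clan (l := linv d)) => y Hy.
  by rewrite labC (H _ _ Hy Hx).
- by apply/subsetP => z; rewrite inE.
- move=> x; rewrite !inE andbT negbK => Hx.
  apply: (lab_clan (l := d)) => y; rewrite inE => Hy.
  exact: H.
Qed.

Section Comb.
Hypothesis Hn : 5 <= #|T|.
Hypothesis Hins : ~ separable G [set: T].
Hypothesis Hbad : forall v, Bad v.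

Lemma nocut (X : {set T}) d : X != set0 -> (exists w, w \notin X) ->
  (forall x w, x \in X -> w \notin X -> lab x w = d) -> False.
Proof. move=> X0 Hw H; apply: Hins; exact: nocut_sep X0 Hw H. Qed.

Lemma side_swap v X d : side v X d -> side v ((~: X) :\ v) (linv d).
Proof.
case=> vX X0 [w [wX wv]] H; split.
- by rewrite !inE eqxx.
- by apply/set0Pn; exists w; rewrite !inE wv wX.
- case/set0Pn: X0 => x Hx; exists x; split; first by rewrite !inE Hx andbF.
  by apply/negP => /eqP Exv; rewrite -Exv Hx in vX.
- move=> x w'; rewrite !inE => /andP [xv xX] Hw' w'v.
  have Hw'X : w' \in X by move: Hw'; rewrite w'v /= negbK.
  by rewrite labC (H _ _ Hw'X xX xv).
Qed.

Lemma bad_avoid u v : u != v -> exists B e, side u B e /\ v \notin B.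
Proof.
move=> uv; case: (Hbad u) => X [d S].
case: (boolP (v \in X)) => vX.
- exists ((~: X) :\ u), (linv d); split; first exact: side_swap.
  by rewrite !inE vX andbF.
- by exists X, d.
Qed.

Definition isclan (M : {set T}) :=
  forall z, z \notin M -> exists l, forall m, m \in M -> lab z m = l.

Lemma clan_good M y z0 : isclan M -> 1 < #|M| -> z0 \notin M -> y \in M -> ~ Bad y.
Proof.
move=> CM M2 z0M yM [X [d [yX X0 [w0 [w0X w0y]] H]]].
have [y' [y'M y'y]] : exists y', y' \in M /\ y' != y.
  case/card_gt1P: M2 => a [b [aM bM ab]].
  case: (eqVneq a y) => [Eay|ay]; last by exists a.
  by exists b; split=> //; rewrite -Eay eq_sym.
have lM : forall z m m', z \notin M -> m \in M -> m' \in M -> lab z m = lab z m'.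
  by move=> z m m' zM mM m'M; case: (CM z zM) => l Hl; rewrite !Hl.
case: (classic (exists b, [/\ b \in M, b \notin X & b != y])) => [[b [bM bX by_]]|NB].
- case: (classic (exists a, a \in X /\ a \in M)) => [[a [aX aM]]|NA].
  + have FA : forall z m, z \in X -> z \notin M -> m \in M -> lab z m = d.
      by move=> z m zX zM mM; rewrite (lM z m b zM mM bM); exact: H.
    have FB : forall z m, z \notin X -> z != y -> z \notin M -> m \in M -> lab m z = d.
      move=> z m zX zy zM mM.
      by rewrite labC (lM z m a zM mM aM) labC (H a z aX zX zy) linvK.
    case: (classic (exists z, z \in X /\ z \notin M)) => [[z [zX zM]]|NA1].
      apply: (@nocut (X :\: M) d).
      * by apply/set0Pn; exists z; rewrite inE zX zM.
      * by exists a; rewrite inE aM.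
      * move=> x w; rewrite !inE => /andP [xM xX] Hw.
        case: (boolP (w \in M)) => wM; first exact: FA.
        apply: H => //; first by move: Hw; rewrite wM.
        by apply/eqP => E; rewrite E yM in wM.
    case: (classic (exists z, [/\ z \notin X, z != y & z \notin M])) => [[z [zX zy zM]]|NA2].
      pose D := [set z | (z \notin X) && (z != y) && (z \notin M)].
      apply: (@nocut (~: D) d).
      * by apply/set0Pn; exists y; rewrite !inE eqxx andbF.
      * by exists z; rewrite !inE zX zy zM.
      * move=> x w; rewrite !inE negbK => Hx /andP [/andP [wX wy] wM].
        case: (boolP (x \in M)) => xM; first exact: FB.
        have xX : x \in X.
          move: Hx; rewrite xM andbT negb_and !negbK => /orP [] // /eqP E.
          by rewrite E yM in xM.
        exact: H.
    case: (boolP (z0 \in X)) => z0X.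
      by apply: NA1; exists z0.
    apply: NA2; exists z0; split=> //.
    by apply/eqP => E; rewrite E yM in z0M.
  + apply: (@nocut X d).
    * exact: X0.
    * by exists y.
    * move=> x w xX wX; case: (eqVneq w y) => [->|wy]; last exact: H.
      have xM : x \notin M by apply/negP => xM; apply: NA; exists x.
      by rewrite (lM x y b xM yM bM); apply: H.
- have y'X : y' \in X.
    by apply/negPn/negP => y'X; apply: NB; exists y'.
  apply: (@nocut (y |: X) d).
  + by apply/set0Pn; exists y; rewrite !inE eqxx.
  + by exists w0; rewrite !inE negb_or w0y w0X.
  + move=> x w; rewrite !inE negb_or => Hx /andP [wy wX].
    case/orP: Hx => [/eqP ->|xX]; last exact: H.
    have wM : w \notin M by apply/negP => wM; apply: NB; exists w.
    by rewrite labC (lM w y y' wM yM y'M) labC (H _ _ y'X wX wy) linvK.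
Qed.

Lemma descent v X c : side v X c -> 1 < #|X| ->
  exists u S e, side u S e /\ #|S| < #|X|.
Proof.
move=> [vX X0 [w0 [w0X w0v]] HX] X2.
have [u uX] : exists u, u \in X by case/set0Pn: X0 => u; exists u.
have uv : u != v by apply/eqP => E; rewrite -E uX in vX.
have [B [e [[uB B0 [w1 [w1B w1u]] HB] vB]]] := bad_avoid uv.
case: (classic (exists b1, b1 \in B /\ b1 \in X)) => [[b1 [b1B b1X]]|NBX].
- case: (classic (exists a, [/\ a \notin B, a != u, a != v & a \notin X])) =>
     [[a [aB au av aX]]|NA].
  + have ec : e = c by rewrite -(HB b1 a b1B aB au) (HX b1 a b1X aX av).
    exists u, (X :&: B), c; split.
    * split.
      - by rewrite inE (negbTE uB) andbF.
      - by apply/set0Pn; exists b1; rewrite inE b1X b1B.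
      - by exists v; rewrite inE (negbTE vX) /= eq_sym uv.
      - move=> x w; rewrite !inE => /andP [xX xB] Hw wu.
        case: (boolP (w \in B)) => wB.
        + have wX : w \notin X by move: Hw; rewrite wB andbT.
          apply: HX => //; apply/eqP => E; by move: vB; rewrite -E wB.
        + by rewrite -ec; apply: HB.
    * apply: proper_card; apply/properP; split.
        by apply/subsetP => z; rewrite inE => /andP [].
      by exists u => //; rewrite inE (negbTE uB) andbF.
  + exists u, ((~: B) :\ u), (linv e); split.
      by apply: side_swap; split=> //; exists w1.
    have sub : (~: B) :\ u \subset ((v |: X) :\ u) :\ b1.
      apply/subsetP => z; rewrite !inE => /andP [zu zB].
      rewrite zu /=; apply/andP; split.
        by apply/eqP => E; move: zB; rewrite E b1B.
      case: (eqVneq z v) => //= zv.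
      by apply/negPn/negP => zX; apply: NA; exists z.
    apply: (leq_ltn_trans (subset_leq_card sub)).
    have h1 : #|v |: X| = #|X|.+1 by rewrite cardsU1 vX.
    have h2 := cardsD1 u (v |: X).
    have h3 := cardsD1 b1 ((v |: X) :\ u).
    have b1u : b1 != u by apply/eqP => E; rewrite -E b1B in uB.
    rewrite !inE uX orbT in h2.
    rewrite !inE b1X orbT b1u /= in h3.
    move: h2; rewrite h1 h3 /= !add1n => /eqP; rewrite !eqSS => /eqP ->.
    by [].
- have [x [xX xu]] : exists x, x \in X /\ x != u.
    case/card_gt1P: X2 => a [b [aX bX ab]].
    case: (eqVneq a u) => [Eau|au]; last by exists a.
    by exists b; split=> //; rewrite -Eau eq_sym.
  have nB : forall z, z \in X -> z \notin B.
    by move=> z zX; apply/negP => zB; apply: NBX; exists z.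
  case/set0Pn: (B0) => b bB.
  have bX : b \notin X by apply/negP => bX; apply: NBX; exists b.
  have bv : b != v by apply/eqP => E; rewrite -E bB in vB.
  have ec : e = linv c.
    by rewrite -(HB b x bB (nB _ xX) xu) labC (HX x b xX bX bv).
  exfalso; apply: (@nocut B e) => //; first by exists u.
  move=> x' w x'B wB; case: (eqVneq w u) => [->|wu]; last exact: HB.
  have x'X : x' \notin X by apply/negP => x'X; apply: NBX; exists x'.
  have x'v : x' != v by apply/eqP => E; rewrite -E x'B in vB.
  by rewrite labC (HX u x' uX x'X x'v) ec.
Qed.

Definition pend p q e := p != q /\ forall z, z != p -> z != q -> lab p z = e.

Lemma ex_pend : exists p q e, pend p q e.
Proof.
have [v _] : exists v : T, v \in [set: T].
  by apply/card_gt0P; rewrite cardsT; apply: leq_trans Hn.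
have [X [c S]] := Hbad v.
move: {2}#|X| (leqnn #|X|) => k; elim: k v X c S => [|k IH] v X c S Hk.
  by case: S => _ X0 _ _; move: Hk; rewrite leqn0 cards_eq0 (negbTE X0).
case: (ltnP 1 #|X|) => H1.
  have [u [S' [e [S'' lt]]]] := descent S H1.
  apply: (IH u S' e S''); rewrite -ltnS; exact: leq_trans lt Hk.
case: S => vX X0 _ HX; case/set0Pn: X0 => p pX.
exists p, v, c; split; first by apply/eqP => E; rewrite -E pX in vX.
move=> z zp zv; apply: HX => //.
apply/negP => zX.
have : 1 < #|X| by apply/card_gt1P; exists z, p.
by rewrite ltnNge H1.
Qed.

Lemma chain p q e : pend p q e -> exists b f, b != q /\ pend b p f.
Proof.
move=> [pq Hp].
have [B [f [[pB B0 [w1 [w1B w1p]] HB] qB]]] := bad_avoid pq.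
have CB : isclan B.
  move=> z zB; case: (eqVneq z p) => [->|zp].
  - exists e => m mB; apply: Hp.
      by apply/eqP => E; rewrite -E mB in pB.
    by apply/eqP => E; rewrite -E mB in qB.
  - by exists (linv f) => m mB; rewrite labC (HB m z mB zB zp).
case: (ltnP 1 #|B|) => B2.
  by case/set0Pn: B0 => y yB; case: (clan_good CB B2 pB yB (Hbad y)).
case/set0Pn: B0 => b bB; exists b, f; split.
  by apply/eqP => E; rewrite -E bB in qB.
split; first by apply/eqP => E; rewrite -E bB in pB.
move=> z zb zp; apply: HB => //.
apply/negP => zB.
have : 1 < #|B| by apply/card_gt1P; exists z, b.
by rewrite ltnNge B2.
Qed.

Lemma pend_ne p q e : pend p q e -> lab p q != e.
Proof.
move=> [pq Hp]; apply/eqP => E.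
apply: (@nocut [set p] e).
- by apply/set0Pn; exists p; rewrite inE.
- by exists q; rewrite inE eq_sym.
- move=> x w; rewrite !inE => /eqP -> wp.
  case: (eqVneq w q) => [->|wq] //; exact: Hp.
Qed.

Lemma out_of (s : seq T) : size s < #|T| -> exists z, z \notin s.
Proof.
move=> Hs; case: (classic (exists z, z \notin s)) => // N; exfalso.
have : #|T| <= #|s|.
  rewrite -cardsT; apply: subset_leq_card; apply/subsetP => z _.
  by apply/negPn/negP => zs; apply: N; exists z.
by move=> h; have := leq_trans h (card_size s); rewrite leqNgt Hs.
Qed.

Lemma pend_uniq p q q' e e' : pend p q e -> pend p q' e' -> q = q'.
Proof.
move=> P1 P2; apply/eqP; apply/negPn/negP => qq'.
have [z] : exists z, z \notin [:: p; q; q'] by apply: out_of; apply: leq_trans Hn.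
rewrite !inE !negb_or => /andP [zp /andP [zq zq']].
have N1 := pend_ne P1; case: P1 => pq H1; case: P2 => pq' H2.
have ee : e = e' by rewrite -(H1 z zp zq) (H2 z zp zq').
by move: N1; rewrite ee (H2 q _ qq') ?eqxx // eq_sym.
Qed.

Lemma K w X d x t ex y : side w X d -> pend x t ex -> x \in X -> t \notin X -> t != w ->
  y \notin X -> y != w -> y != t -> False.
Proof.
move=> [wX _ _ HX] P xX tX tw yX yw yt.
have N := pend_ne P; case: P => xt Hx.
have yx : y != x by apply/eqP => E; move: yX; rewrite E xX.
have E : d = ex by rewrite -(HX x y xX yX yw) (Hx y yx yt).
by move: N; rewrite (HX x t xX tX tw) E eqxx.
Qed.

Lemma K' w X d x t ex y : side w X d -> pend x t ex -> x \notin X -> x != w -> t \in X ->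
  y \in X -> y != t -> False.
Proof.
move=> [wX _ _ HX] P xX xw tX yX yt.
have N := pend_ne P; case: P => xt Hx.
have yx : y != x by apply/eqP => E; move: xX; rewrite -E yX.
have E1 : lab x y = ex := Hx y yx yt.
have E2 : lab y x = d := HX y x yX xX xw.
have E3 : lab x t = linv d by rewrite labC (HX t x tX xX xw).
by move: N; rewrite E3 -E2 labC E1 linvK eqxx.
Qed.

Lemma final : False.
Proof.
have [a1 [a0 [e1 P1]]] := ex_pend.
have [a2 [e2 [a20 P2]]] := chain P1.
have [a3 [e3 [a31 P3]]] := chain P2.
have [a4 [e4 [a42 P4]]] := chain P3.
have a10 : a1 != a0 by case: P1.
have a21 : a2 != a1 by case: P2.
have a32 : a3 != a2 by case: P3.
have a43 : a4 != a3 by case: P4.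
have cyc3 : a0 = a3 -> False.
  move=> E; rewrite E in P1.
  pose C := [set z in [:: a1; a2; a3]].
  have CM : isclan (~: C).
    move=> z; rewrite !inE negbK => /or3P [/eqP ->|/eqP ->|/eqP ->].
    - exists e1 => m; rewrite !inE !negb_or => /andP [m1 /andP [m2 m3]].
      by case: P1 => _ H; apply: H.
    - exists e2 => m; rewrite !inE !negb_or => /andP [m1 /andP [m2 m3]].
      by case: P2 => _ H; apply: H.
    - exists e3 => m; rewrite !inE !negb_or => /andP [m1 /andP [m2 m3]].
      by case: P3 => _ H; apply: H.
  have M2 : 1 < #|~: C|.
    apply: (ar1 (cardsC C) Hn); rewrite cardsE; exact: card_size.
  have /card_gt0P [y yC] : 0 < #|~: C| by apply: leq_trans M2.
  have a1C : a1 \notin ~: C by rewrite !inE eqxx.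
  exact: (clan_good CM M2 a1C yC (Hbad y)).
have a41 : a4 != a1.
  apply/eqP => E; rewrite E in P4; apply: cyc3; exact: pend_uniq P1 P4.
have a03 : a0 != a3 by apply/eqP.
case: (eqVneq a0 a4) => [E04|a04].
- rewrite E04 in P1.
  pose C := [set z in [:: a1; a2; a3; a4]].
  have CM : isclan (~: C).
    move=> z; rewrite !inE negbK => /or4P [/eqP ->|/eqP ->|/eqP ->|/eqP ->].
    - exists e1 => m; rewrite !inE !negb_or => /andP [m1 /andP [m2 /andP [m3 m4]]].
      by case: P1 => _ H; apply: H.
    - exists e2 => m; rewrite !inE !negb_or => /andP [m1 /andP [m2 /andP [m3 m4]]].
      by case: P2 => _ H; apply: H.
    - exists e3 => m; rewrite !inE !negb_or => /andP [m1 /andP [m2 /andP [m3 m4]]].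
      by case: P3 => _ H; apply: H.
    - exists e4 => m; rewrite !inE !negb_or => /andP [m1 /andP [m2 /andP [m3 m4]]].
      by case: P4 => _ H; apply: H.
  have M1 : 0 < #|~: C|.
    apply: (ar2 (cardsC C) Hn); rewrite cardsE; exact: card_size.
  case: (ltnP 1 #|~: C|) => M2.
    have /card_gt0P [y yC] := M1.
    have a1C : a1 \notin ~: C by rewrite !inE eqxx.
    exact: (clan_good CM M2 a1C yC (Hbad y)).
  have /card_gt0P [w wC] := M1.
  have Hall : forall z, z \notin C -> z = w.
    move=> z zC; apply/eqP; apply/negPn/negP => zw.
    have : 1 < #|~: C| by apply/card_gt1P; exists z, w; rewrite inE zC.
    by rewrite ltnNge M2.
  move: wC; rewrite !inE !negb_or => /andP [wa1 /andP [wa2 /andP [wa3 wa4]]].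
  have a1w : a1 != w by rewrite eq_sym.
  have a2w : a2 != w by rewrite eq_sym.
  have a3w : a3 != w by rewrite eq_sym.
  have a4w : a4 != w by rewrite eq_sym.
  have a12 : a1 != a2 by rewrite eq_sym.
  have a13 : a1 != a3 by rewrite eq_sym.
  have a14 : a1 != a4 by rewrite eq_sym.
  have a23 : a2 != a3 by rewrite eq_sym.
  have a24 : a2 != a4 by rewrite eq_sym.
  have a34 : a3 != a4 by rewrite eq_sym.
  have [X [d S]] := Hbad w.
  have S' := S; case: S' => wX X0 [w' [w'X w'w]] _.
  have w'C : w' \in C by apply/negPn/negP => h; move: w'w; rewrite (Hall _ h) eqxx.
  case/set0Pn: X0 => x xX.
  have xC : x \in C.
    by apply/negPn/negP => h; move: wX; rewrite -(Hall _ h) xX.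
  rewrite !inE in w'C xC.
  case: (boolP (a1 \in X)) => ?; case: (boolP (a2 \in X)) => ?;
  case: (boolP (a3 \in X)) => ?; case: (boolP (a4 \in X)) => ?.
  all: try first [ by apply: (K S P1 (y:=a1))
  | by apply: (K' S P1 (y:=a1))
  | by apply: (K S P1 (y:=a2))
  | by apply: (K' S P1 (y:=a2))
  | by apply: (K S P1 (y:=a3))
  | by apply: (K' S P1 (y:=a3))
  | by apply: (K S P2 (y:=a2))
  | by apply: (K' S P2 (y:=a2))
  | by apply: (K S P2 (y:=a3))
  | by apply: (K' S P2 (y:=a3))
  | by apply: (K S P2 (y:=a4))
  | by apply: (K' S P2 (y:=a4))
  | by apply: (K S P3 (y:=a1))
  | by apply: (K' S P3 (y:=a1))
  | by apply: (K S P3 (y:=a3))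
  | by apply: (K' S P3 (y:=a3))
  | by apply: (K S P3 (y:=a4))
  | by apply: (K' S P3 (y:=a4))
  | by apply: (K S P4 (y:=a1))
  | by apply: (K' S P4 (y:=a1))
  | by apply: (K S P4 (y:=a2))
  | by apply: (K' S P4 (y:=a2))
  | by apply: (K S P4 (y:=a4))
  | by apply: (K' S P4 (y:=a4))
  | by case/or4P: w'C => /eqP E; move: w'X; rewrite E => /negP H; apply: H
  | by case/or4P: xC => /eqP E; move: xX; rewrite E; apply/negP ].
- have a13 : a1 != a3 by rewrite eq_sym.
  have a12 : a1 != a2 by rewrite eq_sym.
  have a14 : a1 != a4 by rewrite eq_sym.
  have a24 : a2 != a4 by rewrite eq_sym.
  have a23 : a2 != a3 by rewrite eq_sym.
  have a40 : a4 != a0 by rewrite eq_sym.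
  have a30 : a3 != a0 by rewrite eq_sym.
  case: (P1) => _ H1; case: (P2) => _ H2; case: (P3) => _ H3; case: (P4) => _ H4.
  have h13 := H1 a3 a31 a30.
  have h31 := H3 a1 a13 a12.
  have h41 := H4 a1 a14 a13.
  have h14 := H1 a4 a41 a40.
  have h42 := H4 a2 a24 a23.
  have h24 := H2 a4 a42 a41.
  have h23 := H2 a3 a32 a31.
  have N := pend_ne P3.
  have e3e1 : e3 = linv e1 by rewrite -h31 labC h13.
  have e4e1 : e4 = linv e1 by rewrite -h41 labC h14.
  have e4e2 : e4 = linv e2 by rewrite -h42 labC h24.
  have e12 : e1 = e2 by rewrite -(linvK e1) -e4e1 e4e2 linvK.
  by move: N; rewrite labC h23 -e12 e3e1 eqxx.
Qed.

End Comb.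
End Main.

Theorem theorem3p3 (R : realFieldType) (T : finType) (G : wograph R T) :
  (5 <= #|T|)%N -> inseparable G [set: T] ->
  exists v : T, inseparable G ([set: T] :\ v).
Proof.
move=> Hn Hins.
apply: NNPP => Hno.
apply: (final Hn Hins).
move=> v; apply: sep_side; apply: NNPP => Hs; apply: Hno; exists v; exact: Hs.
Qed.
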